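(* Let $n\ge 3$ and let $S$ be a $4$-cap free, $n$-cup free configuration of size at least $\binom{n-1}{2}+1$. Let $L(S)$ be the set of starting points of all $(n-1)$-cups in $S$, $R(S)$ the set of ending points of all $(n-1)$-cups in $S$, $p_S$ the largest element of $L(S)$ and $q_S$ the smallest element of $R(S)$. Then $p_S \leq q_S$.
   Context: A configuration is a finite set $S$ of points with a linear order $<$ and, for every $3$-element subset, an arbitrary assignment declaring it either a cap or a cup. Points $x_1<\cdots<x_a$ form an $a$-cup (resp. $a$-cap) if every consecutive triple $\{x_{i-1},x_i,x_{i+1}\}$, $1<i<a$, is assigned cup (resp. cap); $1$- and $2$-element sets are both caps and cups. A cup $x_1\cdots x_a$ starts with $x_1$ and ends with $x_a$. (Under the hypotheses, $S$ contains at least one $(n-1)$-cup, so $L(S)$ and $R(S)$ are nonempty.) *)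

(* Defs.v *)
From mathcomp Require Import all_boot all_order.
Set Implicit Arguments. Unset Strict Implicit. Unset Printing Implicit Defensive.

(* A configuration of size N: points are 'I_N, linearly ordered by their index.
   [cup i j k] (for i < j < k) says whether the triple {i,j,k} is a cup;
   otherwise it is a cap.  The value of [cup] on non-increasing triples is
   irrelevant. *)
Record config (N : nat) := Config { cup : 'I_N -> 'I_N -> 'I_N -> bool }.

Fixpoint consec3 (N : nat) (P : 'I_N -> 'I_N -> 'I_N -> bool) (s : seq 'I_N) : bool :=
  match s with
  | x :: ((y :: z :: _) as t) => P x y z && consec3 P t
  | _ => true
  end.

Definition incr (N : nat) (s : seq 'I_N) : bool := sorted (fun x y : 'I_N => x < y) s.

Definition is_cup (N : nat) (S : config N) (a : nat) (s : seq 'I_N) : bool :=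
  [&& size s == a, incr s & consec3 (cup S) s].
Definition is_cap (N : nat) (S : config N) (a : nat) (s : seq 'I_N) : bool :=
  [&& size s == a, incr s & consec3 (fun x y z => ~~ cup S x y z) s].

Definition cup_free (N : nat) (S : config N) (a : nat) : Prop :=
  forall s, ~~ is_cup S a s.
Definition cap_free (N : nat) (S : config N) (a : nat) : Prop :=
  forall s, ~~ is_cap S a s.

Definition Lset (N : nat) (S : config N) (n : nat) : {set 'I_N} :=
  [set x | [exists t : (n.-1).-tuple 'I_N, is_cup S n.-1 t && (head x t == x)]].
Definition Rset (N : nat) (S : config N) (n : nat) : {set 'I_N} :=
  [set x | [exists t : (n.-1).-tuple 'I_N, is_cup S n.-1 t && (last x t == x)]].

(* p_S = max L(S), q_S = min R(S) (as indices; sets are nonempty under the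
   hypotheses, so the default values are never used) *)
Definition pS (N : nat) (S : config N) (n : nat) : nat := \max_(i in Lset S n) (i : nat).
Definition qS (N : nat) (S : config N) (n : nat) : nat := \big[minn/N]_(i in Rset S n) (i : nat).

(* Main.v *)
Require Import Defs.
From mathcomp Require Import all_boot all_order.

Lemma consec3_cons2 N (P : 'I_N -> 'I_N -> 'I_N -> bool) u v r :
  consec3 P (u :: v :: r) = (if r is w :: _ then P u v w else true) && consec3 P (v :: r).
Proof. by case: r => //= w r; case: r. Qed.

Lemma consec3_app3 N (P : 'I_N -> 'I_N -> 'I_N -> bool) s x y z :
  consec3 P (s ++ [:: x; y; z]) = consec3 P (s ++ [:: x; y]) && P x y z.
Proof.
case: s => [|u s]; first by rewrite /= andbT.
elim: s u => [|v s IH] u; first by rewrite /= !andbT.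
rewrite !cat_cons !consec3_cons2 -!cat_cons IH.
by case: s {IH} => [|w s] /=; rewrite andbA.
Qed.

Lemma key n N (S : config N) (p q : 'I_N) :
  3 <= n -> cap_free S 4 -> cup_free S n ->
  p \in Lset S n -> q \in Rset S n -> (p <= q)%N.
Proof.
move=> n3 cap4 cupn; have n1 : 2 <= n.-1 by move: n3; case: n {cupn} => [|[|n]].
rewrite !inE => /existsP [t /andP [/and3P [st itt ct] /eqP hp]].
move=> /existsP [s /andP [/and3P [ss iss cs] /eqP hq]].
rewrite leqNgt; apply/negP => qp.
have [b [r et]] : exists b r, tval t = p :: b :: r.
  move: st hp; case: (tval t) => [|p' [|b r]] /=; try by move=> /eqP h; rewrite -h in n1.
  by move=> _ ->; exists b, r.
have [a [s0 es]] : exists a s0, tval s = s0 ++ [:: a; q].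
  move: ss hq; case/lastP: (tval s) => [|s1 q']; first by move=> /eqP h; rewrite -h in n1.
  rewrite last_rcons => + -> ; case/lastP: s1 => [|s0 a].
    by rewrite /= => /eqP h; rewrite -h in n1.
  by move=> _; exists a, s0; rewrite -cats1 -cats1 -catA.
rewrite et in itt ct; rewrite es in iss cs ss.
have aq : a < q by move: iss; rewrite /incr sorted_cat_cons /= andbT => /andP [].
have pb : p < b by move: itt; rewrite /incr /= =>  /andP [].
have c1 : ~~ cup S a q p.
  apply/negP => c; move: (cupn (s0 ++ [:: a; q; p])) => /negP; apply.
  apply/and3P; split.
  - move: ss; rewrite !size_cat /= => /eqP h; apply/eqP; rewrite addnS h prednK //; exact: leq_trans n3.
  - by move: iss; rewrite /incr !sorted_cat_cons /= !andbT => /andP [-> ->]; rewrite qp.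
  - by rewrite consec3_app3 cs c.
have c2 : ~~ cup S q p b.
  apply/negP => c; move: (cupn [:: q, p, b & r]) => /negP; apply.
  apply/and3P; split.
  - move: st; rewrite et /= => /eqP h; apply/eqP; rewrite h prednK //; exact: leq_trans n3.
  - by rewrite /incr /= qp.
  - by rewrite /= c.
move: (cap4 [:: a; q; p; b]) => /negP; apply.
by rewrite /is_cap /incr /= aq qp pb c1 c2.
Qed.

Theorem lemma5p6 (n N : nat) (S : config N) :
  3 <= n ->
  cap_free S 4 ->
  cup_free S n ->
  'C(n.-1, 2) + 1 <= N ->
  pS S n <= qS S n.
Proof.
move=> n3 cap4 cupn _.
rewrite /pS; apply/bigmax_leqP => p pL.
rewrite /qS; elim/big_ind: _.
- exact: ltnW (ltn_ord p).
- by move=> x y hx hy; rewrite leq_min hx hy.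
- by move=> q qR; apply: (key _ _ _ _ _ n3 cap4 cupn pL qR).
Qed.
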